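(* Let $n\ge 1$ and $M\ge 1$ be integers, let $\mathcal{X}=\{x^{(1)},\dots,x^{(L)}\}\subset\mathbb{C}$ be a finite set of $L$ channel input symbols, let $\sigma^2>0$, let $g:\mathbb{C}\to[0,+\infty]$ be measurable, let $\epsilon>0$, $B>0$ and $\delta\in\mathbb{R}$. Let $\mathscr{C}$ be an $(n,M,\epsilon,B,\delta)$-code (as defined in the context). Then $$\delta\ge\Big(1-\frac1B\sum_{\ell=1}^L P_{\mathscr{C}}(x^{(\ell)})\,\mathbb{E}\big[g(x^{(\ell)}+W)\big]\Big)^+,$$ where $(a)^+=\max(a,0)$ and $W$ is a complex circularly symmetric Gaussian random variable whose real and imaginary parts have zero means and variances $\sigma^2/2$.
   Context: Channel: for an input $\boldsymbol{x}\in\mathbb{C}^n$ the outputs are $\boldsymbol{Y}=\boldsymbol{x}+\boldsymbol{N}_1$ and $\boldsymbol{Z}=\boldsymbol{x}+\boldsymbol{N}_2$, where all components of $\boldsymbol{N}_1,\boldsymbol{N}_2$ are i.i.d. complex circularly symmetric Gaussian with real and imaginary parts of zero mean and variance $\sigma^2/2$; so $f_{Y|X}(y|x)=\frac{1}{\pi\sigma^2}\exp(-|y-x|^2/\sigma^2)$ per coordinate and $f_{\boldsymbol{Y}|\boldsymbol{X}}(\boldsymbol{y}|\boldsymbol{x})=\prod_t f_{Y|X}(y_t|x_t)$ (same for $\boldsymbol{Z}$). An $(n,M)$-code is $\mathscr{C}=\{(\boldsymbol{u}(i),\mathcal{D}_i)\}_{i=1}^M$ with codewords $\boldsymbol{u}(i)=(u_1(i),\dots,u_n(i))\in\mathcal{X}^n$,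 $|u_t(i)|\le P$ for a fixed peak power $P>0$, and pairwise disjoint measurable decoding sets $\mathcal{D}_i\subseteq\mathbb{C}^n$; $M\le 2^{n\lfloor\log_2L\rfloor}$. Error probabilities: $\gamma_i(\mathscr{C})=1-\int_{\mathcal{D}_i}f_{\boldsymbol{Y}|\boldsymbol{X}}(\boldsymbol{y}|\boldsymbol{u}(i))d\boldsymbol{y}$, $\gamma(\mathscr{C})=\frac1M\sum_i\gamma_i$; $(n,M,\epsilon)$-code means $\gamma(\mathscr{C})<\epsilon$. With $\bar g(\boldsymbol z)=\frac1n\sum_t g(z_t)$: $\theta_i(\mathscr{C},B)=\Pr[\bar g(\boldsymbol Z)<B\mid\boldsymbol X=\boldsymbol u(i)]$, $\theta(\mathscr{C},B)=\frac1M\sum_i\theta_i$; $(n,M,\epsilon,B,\delta)$-code means an $(n,M,\epsilon)$-code with $\theta(\mathscr{C},B)<\delta$. Types: $P_{\boldsymbol u(i)}(x^{(\ell)})=\frac1n\#\{t:u_t(i)=x^{(\ell)}\}$, $P_{\mathscr{C}}=\frac1M\sum_iP_{\boldsymbol u(i)}$. *)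

(* Defs.v *)
(* C is represented as R * R
   (real part, imaginary part), C^n as n.-tuple (R * R) with its
   product sigma-algebra (library instance on tuples). *)
From HB Require Import structures.
From mathcomp Require Import all_boot all_order all_algebra.
From mathcomp Require Import all_classical all_reals all_analysis measurable_realfun.
Set Implicit Arguments. Unset Strict Implicit. Unset Printing Implicit Defensive.
Import Order.TTheory GRing.Theory Num.Theory.
Local Open Scope ring_scope.
Local Open Scope classical_set_scope.

Section Defs.
Variable R : realType.

Definition lebC := ((@lebesgue_measure R) \x (@lebesgue_measure R))%E.

Definition cnorm2 (z : R * R) : R := z.1 ^+ 2 + z.2 ^+ 2.
Definition cabs (z : R * R) : R := Num.sqrt (cnorm2 z).
Definition csub (y x : R * R) : R * R := (y.1 - x.1, y.2 - x.2).
Definition cadd (y x : R * R) : R * R := (y.1 + x.1, y.2 + x.2).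

Definition fYX (s2 : R) (x y : R * R) : R :=
  (pi * s2)^-1 * expR (- cnorm2 (csub y x) / s2).

(* int_{C^k} F(y) f_{Y|X}(y|u) dy for the memoryless channel, written as
   the iterated (Tonelli) integral over the k coordinates. *)
Fixpoint chanInt (s2 : R) (k : nat) :
  k.-tuple (R * R) -> (k.-tuple (R * R) -> \bar R) -> \bar R :=
  match k with
  | 0 => fun _ F => F [tuple]
  | k'.+1 => fun u F =>
      (\int[lebC]_y ((fYX s2 (thead u) y)%:E *
          chanInt s2 (behead_tuple u) (fun t => F [tuple of y :: t])))%E
  end.

Definition chanProb (s2 : R) (k : nat) (u : k.-tuple (R * R))
    (A : set (k.-tuple (R * R))) : \bar R :=
  chanInt s2 u (fun y => (\1_A y)%:E).

Definition gbar (g : R * R -> \bar R) (n : nat) (z : n.-tuple (R * R)) : \bar R :=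
  ((n%:R^-1)%:E * \sum_(t < n) g (tnth z t))%E.

Definition avg_err (s2 : R) (n M : nat) (u : 'I_M -> n.-tuple (R * R))
    (D : 'I_M -> set (n.-tuple (R * R))) : \bar R :=
  ((M%:R^-1)%:E * \sum_(i < M) (1 - chanProb s2 (u i) (D i)))%E.

Definition avg_theta (s2 : R) (g : R * R -> \bar R) (B : R) (n M : nat)
    (u : 'I_M -> n.-tuple (R * R)) : \bar R :=
  ((M%:R^-1)%:E *
     \sum_(i < M) chanProb s2 (u i) [set z | (gbar g z < B%:E)%E])%E.

Definition ctype (n : nat) (v : n.-tuple (R * R)) (x : R * R) : R :=
  n%:R^-1 * #|[set t : 'I_n | tnth v t == x]|%:R.
Definition code_type (n M : nat) (u : 'I_M -> n.-tuple (R * R)) (x : R * R) : R :=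
  M%:R^-1 * \sum_(i < M) ctype (u i) x.

(* E[g(x + W)], W ~ CN(0, sigma^2) with density f_{Y|X}(. | 0) *)
Definition EgW (s2 : R) (g : R * R -> \bar R) (x : R * R) : \bar R :=
  (\int[lebC]_w (g (cadd x w) * (fYX s2 (0, 0) w)%:E))%E.

Definition is_code (s2 P : R) (L : nat) (xs : 'I_L -> R * R) (n M : nat)
    (u : 'I_M -> n.-tuple (R * R)) (D : 'I_M -> set (n.-tuple (R * R)))
    (eps : R) : Prop :=
  [/\ (forall i t, exists l, tnth (u i) t = xs l),
      (forall i t, cabs (tnth (u i) t) <= P),
      (forall i, measurable (D i)),
      (forall i j, i != j -> D i `&` D j = set0) &
      (M <= 2 ^ (n * trunc_log 2 L))%N] /\
  (avg_err s2 u D < eps%:E)%E.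

Definition is_code_B (s2 P : R) (L : nat) (xs : 'I_L -> R * R) (n M : nat)
    (u : 'I_M -> n.-tuple (R * R)) (D : 'I_M -> set (n.-tuple (R * R)))
    (g : R * R -> \bar R) (eps B delta : R) : Prop :=
  is_code s2 P xs u D eps /\ (avg_theta s2 g B u < delta%:E)%E.

End Defs.

(* Main.v *)
Require Import Defs.
From HB Require Import structures.
From mathcomp Require Import all_boot all_order all_algebra.
From mathcomp Require Import all_classical all_reals all_analysis measurable_realfun.
From mathcomp Require Import lra.
Import Order.TTheory GRing.Theory Num.Theory.
Local Open Scope ring_scope.
Local Open Scope classical_set_scope.

Section LCinst.
Variable R : realType.
Local Open Scope ereal_scope.
HB.instance Definition _ := Measure.copy (@lebC R)
  ((@lebesgue_measure R) \x (@lebesgue_measure R))%E.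

Lemma lebC_sigma_finite : sigma_finite setT (@lebC R).
Proof.
have /sigma_finiteP[F [TF ndF Foo]] := sigma_finiteT (@lebesgue_measure R).
exists (fun n => F n `*` F n).
  rewrite -setXTT TF predeqE => -[x y]; split.
    move=> [/= [n _ Fnx] [k _ Gky]]; exists (maxn n k) => //; split.
    - by move: x Fnx; exact/subsetPset/ndF/leq_maxl.
    - by move: y Gky; exact/subsetPset/ndF/leq_maxr.
  by move=> [n _ []/= ? ?]; split; exists n.
move=> k; have [? ?] := Foo k.
split; first exact: measurableX.
by rewrite /lebC product_measure1E// lte_mul_pinfty// ge0_fin_numE.
Qed.

HB.instance Definition _ := Measure_isSigmaFinite.Build _ _ _ (@lebC R)
  lebC_sigma_finite.
End LCinst.



Section Gauss.
Variable R : realType.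
Variable s2 : R.
Hypothesis s2gt0 : 0 < s2.
Local Notation LC := (@lebC R).
Let sg : R := Num.sqrt (s2 / 2).

Lemma fYX_gt0 x y : 0 < fYX s2 x y.
Proof. by rewrite /fYX mulr_gt0 ?expR_gt0 // invr_gt0 mulr_gt0 // pi_gt0. Qed.

Lemma fYXE x y : fYX s2 x y = normal_pdf x.1 sg y.1 * normal_pdf x.2 sg y.2.
Proof.
have sg0 : sg != 0 by rewrite /sg gt_eqF // sqrtr_gt0 divr_gt0.
have sq : sg ^+ 2 *+ 2 = s2.
  by rewrite /sg sqr_sqrtr ?divr_ge0 ?ltW // -mulr_natr -mulrA mulVf ?mulr1.
rewrite !normal_pdfE // /normal_peak /normal_fun /fYX.
rewrite sq.
rewrite mulrACA -expRD.
have -> : - (y.1 - x.1) ^+ 2 / s2 + - (y.2 - x.2) ^+ 2 / s2 = - cnorm2 (csub y x) / s2.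
  by rewrite /cnorm2 /csub /= -mulrDl -opprD.
congr (_ * _).
rewrite -invfM -expr2 sqr_sqrtr; last by rewrite mulrn_wge0 // mulr_ge0 ?pi_ge0 // sqr_ge0.
by rewrite -mulrnAl sq mulrC.
Qed.

Lemma measurable_fYX x : measurable_fun setT (fYX s2 x).
Proof.
rewrite (_ : fYX s2 x = fun y => normal_pdf x.1 sg y.1 * normal_pdf x.2 sg y.2);
  last by apply/funext => y; rewrite fYXE.
apply: measurable_funM.
  by apply: measurableT_comp; [exact: measurable_normal_pdf | exact: measurable_fst].
by apply: measurableT_comp; [exact: measurable_normal_pdf | exact: measurable_snd].
Qed.

Local Open Scope ereal_scope.
Lemma integral_fYX x : \int[LC]_y (fYX s2 x y)%:E = 1.
Proof.
rewrite /lebC.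
under eq_integral do rewrite fYXE EFinM.
rewrite fubini_tonelli1 /=; last 2 first.
- apply/measurable_EFinP; apply: measurable_funM.
    by apply: measurableT_comp; [exact: measurable_normal_pdf | exact: measurable_fst].
  by apply: measurableT_comp; [exact: measurable_normal_pdf | exact: measurable_snd].
- by move=> z; rewrite -EFinM lee_fin mulr_ge0 // normal_pdf_ge0.
rewrite /fubini_F /=.
under eq_integral => y1 _.
  rewrite ge0_integralZl //; last 3 first.
  - by apply/measurable_EFinP; exact: measurable_normal_pdf.
  - by move=> z _; rewrite lee_fin normal_pdf_ge0.
  - by rewrite lee_fin normal_pdf_ge0.
  rewrite integral_normal_pdf mule1.
  over.
exact: integral_normal_pdf.
Qed.
End Gauss.

Section Shift.
Variable R : realType.
Local Notation LC := (@lebC R).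
Local Notation leb := (@lebesgue_measure R).
Local Notation T := (measurableTypeR R * measurableTypeR R)%type.

Lemma mshift (c : R) : measurable_fun setT (fun w : R => c + w).
Proof. exact: measurable_funD. Qed.

Lemma leb_shift (c : R) (A : set R) : measurable A ->
  leb ((fun w => c + w) @^-1` A) = leb A.
Proof.
move=> mA; apply/esym.
have := @lebesgue_measure_unique R (@pushforward _ _ (measurableTypeR R) (measurableTypeR R) R leb (fun w => c + w)).
move=> /(_ (mshift c)) /(_ _ A mA) -> //.
  move=> X [[a b] _ <-] /=; rewrite /pushforward.
  have -> : (fun w => c + w) @^-1` `]a, b] = `]a - c, b - c] :> set R.
    apply/seteqP; split => w /=; rewrite !in_itv /= => /andP[h1 h2];
      apply/andP; split.
    1-4: lra.
  rewrite !lebesgue_measure_itv /= !lte_fin ltrD2r.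
  case: ifP => // _; congr (_%:E); lra.
Qed.

Lemma mcadd (c : R * R) : measurable_fun (setT : set T) (fun w : T => (Defs.cadd c w : T)).
Proof.
apply/measurable_fun_pairP; split.
  by apply: measurable_funD => //; exact: measurable_fst.
by apply: measurable_funD => //; exact: measurable_snd.
Qed.

Local Open Scope ereal_scope.
Lemma lebC_shift (c : R * R) (X : set T) : measurable X ->
  LC ((fun w => Defs.cadd c w) @^-1` X) = LC X.
Proof.
move=> mX; apply/esym.
have := @product_measure_unique _ _ _ _ R leb leb (@pushforward _ _ T T R LC (fun w => Defs.cadd c w)).
move=> /(_ (mcadd c)) /(_ _ X mX).
rewrite /lebC => -> // A B mA mB.
rewrite /pushforward /=.
transitivity ((leb \x leb)%E (((fun w => (c.1 + w)%R) @^-1` A) `*` ((fun w => (c.2 + w)%R) @^-1` B))).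
  by [].
rewrite product_measure1E; first by move: (@leb_shift c.1 A mA) (@leb_shift c.2 B mB) => /= -> ->.
  by rewrite -[X in measurable X]setTI; apply: mshift.
by rewrite -[X in measurable X]setTI; apply: mshift.
Qed.

Definition LCs (c : R * R) : {measure set T -> \bar R} :=
  @measure_function_pushforward__canonical__measure_function_Measure _ _ T T R LC
    (fun w => Defs.cadd c w) (mcadd c).

Lemma integral_lebC_shift (c : R * R) (phi : T -> \bar R) :
  measurable_fun setT phi -> (forall z, 0 <= phi z) ->
  \int[LC]_z phi z = \int[LC]_w phi (Defs.cadd c w).
Proof.
move=> mphi phi0.
rewrite (@eq_measure_integral _ _ _ _ (LCs c)); last first.
  by move=> A mA _; rewrite /LCs /= /pushforward; symmetry; exact: (@lebC_shift c A mA).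
rewrite /LCs /= ge0_integral_pushforward //.
exact: mcadd.
Qed.
End Shift.

Section Chan.
Variable R : realType.
Variable s2 : R.
Hypothesis s2gt0 : 0 < s2.
Local Notation LC := (@lebC R).
Local Notation T := (R * R)%type.
Local Open Scope ereal_scope.

Lemma chanIntS k (u : k.+1.-tuple T) F : chanInt s2 u F =
  \int[LC]_y ((fYX s2 (thead u) y)%:E *
          chanInt s2 (behead_tuple u) (fun t => F [tuple of y :: t])).
Proof. by []. Qed.

Lemma chanInt_meas k : forall (v : k.-tuple T) d (X : measurableType d)
  (G : X -> k.-tuple T -> \bar R),
  measurable_fun setT (fun p : X * k.-tuple T => G p.1 p.2) ->
  (forall x z, 0 <= G x z) ->
  measurable_fun setT (fun x => chanInt s2 v (G x)) /\
  (forall x, 0 <= chanInt s2 v (G x)).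
Proof.
elim: k => [|k IH] v d X G mG G0.
  split => //=.
  have := measurableT_comp mG (measurable_fun_pair (@measurable_id _ X setT) (measurable_cst ([tuple] : 0.-tuple T))).
  by apply.
have mG' : measurable_fun setT
    (fun q : (X * T) * k.-tuple T => G q.1.1 [tuple of q.1.2 :: q.2]).
  have := measurableT_comp mG (measurable_fun_pair
     (measurableT_comp (@measurable_fst _ _ X T) (@measurable_fst _ _ (X * T)%type (k.-tuple T)))
     (measurable_cons (measurableT_comp (@measurable_snd _ _ X T) (@measurable_fst _ _ (X * T)%type (k.-tuple T)))
        (@measurable_snd _ _ (X * T)%type (k.-tuple T)))).
  by apply.
have [IH1 IH2] := IH (behead_tuple v) _ (X * T)%type
  (fun p t => G p.1 [tuple of p.2 :: t]) mG' (fun x z => G0 _ _).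
have mH : measurable_fun setT (fun p : X * T => (fYX s2 (thead v) p.2)%:E *
    chanInt s2 (behead_tuple v) (fun t => G p.1 [tuple of p.2 :: t])).
  apply: emeasurable_funM => //.
  apply/measurable_EFinP; apply: measurableT_comp => //.
  exact: measurable_fYX.
have H0 : forall p : X * T, 0 <= (fYX s2 (thead v) p.2)%:E *
    chanInt s2 (behead_tuple v) (fun t => G p.1 [tuple of p.2 :: t]).
  by move=> p; rewrite mule_ge0 // lee_fin ltW // fYX_gt0.
split.
  have := (@measurable_fun_fubini_tonelli_F _ _ X
    (measurableTypeR R * measurableTypeR R)%type R
    LC _ mH H0).
  by apply.
by move=> x /=; apply: integral_ge0 => y _; exact: H0 (x, y).
Qed.

Lemma chanInt_ge0 k (v : k.-tuple T) F : (forall z, 0 <= F z) -> 0 <= chanInt s2 v F.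
Proof.
elim: k v F => [|k IH] v F F0 //=.
apply: integral_ge0 => y _; apply: mule_ge0; first by rewrite lee_fin ltW // fYX_gt0.
by apply: IH => z; exact: F0.
Qed.

Lemma chanInt_sec k (v : k.-tuple T) (F : k.+1.-tuple T -> \bar R) :
  measurable_fun setT F -> (forall z, 0 <= F z) ->
  measurable_fun setT (fun y : T => chanInt s2 v (fun t => F [tuple of y :: t])).
Proof.
move=> mF F0.
have mG : measurable_fun setT (fun p : T * k.-tuple T => F [tuple of p.1 :: p.2]).
  have := measurableT_comp mF (measurable_cons (@measurable_fst _ _ T (k.-tuple T))
    (@measurable_snd _ _ T (k.-tuple T))).
  by apply.
by have [] := @chanInt_meas k v _ T (fun y t => F [tuple of y :: t]) mG (fun _ _ => F0 _).
Qed.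

Lemma meas_sec k (F : k.+1.-tuple T -> \bar R) (y : T) :
  measurable_fun setT F -> measurable_fun setT (fun t : k.-tuple T => F [tuple of y :: t]).
Proof.
move=> mF; have := measurableT_comp mF (measurable_cons (measurable_cst y)
  (@measurable_id _ (k.-tuple T) setT)).
by apply.
Qed.

Lemma fYXE0 x y : 0 <= (fYX s2 x y)%:E.
Proof. by rewrite lee_fin ltW // fYX_gt0. Qed.

Lemma measurable_fYXE x : measurable_fun setT (fun y => (fYX s2 x y)%:E).
Proof. by apply/measurable_EFinP; exact: measurable_fYX. Qed.

Lemma chanIntD k (v : k.-tuple T) (F1 F2 : k.-tuple T -> \bar R) :
  measurable_fun setT F1 -> measurable_fun setT F2 ->
  (forall z, 0 <= F1 z) -> (forall z, 0 <= F2 z) ->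
  chanInt s2 v (fun z => F1 z + F2 z) = chanInt s2 v F1 + chanInt s2 v F2.
Proof.
elim: k v F1 F2 => [|k IH] v F1 F2 mF1 mF2 F10 F20 //.
rewrite !chanIntS -ge0_integralD //.
- apply: eq_integral => y _.
  rewrite (IH _ (fun t => F1 [tuple of y :: t]) (fun t => F2 [tuple of y :: t])) //.
  + by rewrite ge0_muleDr // chanInt_ge0.
  + exact: meas_sec.
  + exact: meas_sec.
- by move=> y _; rewrite mule_ge0 ?fYXE0 // chanInt_ge0.
- apply: emeasurable_funM; first exact: measurable_fYXE.
  exact: chanInt_sec.
- by move=> y _; rewrite mule_ge0 ?fYXE0 // chanInt_ge0.
- apply: emeasurable_funM; first exact: measurable_fYXE.
  exact: chanInt_sec.
Qed.

Lemma leb_setT : (@lebesgue_measure R) setT = +oo.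
Proof. by rewrite -set_itv_infty_infty lebesgue_measure_itv /=. Qed.

Lemma LC_setT : LC setT = +oo.
Proof.
have -> : LC setT = (@lebesgue_measure R) setT * (@lebesgue_measure R) setT.
  by rewrite -setXTT /lebC product_measure1E.
by rewrite leb_setT mulyy.
Qed.

Lemma intf_cst x (c : \bar R) : 0 <= c -> \int[LC]_y ((fYX s2 x y)%:E * c) = c.
Proof.
case: c => [r| |] // c0.
  rewrite ge0_integralZr //; last 2 first.
  - exact: measurable_fYXE.
  - by move=> y _; exact: fYXE0.
  by rewrite integral_fYX // mul1e.
under eq_integral do rewrite gt0_muley ?lte_fin ?fYX_gt0 //.
rewrite (integral_cst LC measurableT).
transitivity (+oo * +oo : \bar R); last exact: mulyy.
congr (_ * _); exact: LC_setT.
Qed.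

Lemma chanInt_cst k (v : k.-tuple T) (c : \bar R) : 0 <= c ->
  chanInt s2 v (fun _ => c) = c.
Proof.
elim: k v => [|k IH] v c0 //.
rewrite chanIntS.
under eq_integral do rewrite IH //.
exact: intf_cst.
Qed.

Lemma chanIntZ k (v : k.-tuple T) (c : R) F : (0 <= c)%R ->
  measurable_fun setT F -> (forall z, 0 <= F z) ->
  chanInt s2 v (fun z => c%:E * F z) = c%:E * chanInt s2 v F.
Proof.
elim: k v F => [|k IH] v F c0 mF F0 //.
rewrite !chanIntS -ge0_integralZl //.
- apply: eq_integral => y _.
  rewrite (IH _ (fun t => F [tuple of y :: t])) //; last exact: meas_sec.
  by rewrite muleCA.
- apply: emeasurable_funM; first exact: measurable_fYXE.
  exact: chanInt_sec.
- by move=> y _; rewrite mule_ge0 ?fYXE0 // chanInt_ge0.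
Qed.

Lemma chanInt_le k (v : k.-tuple T) F1 F2 :
  measurable_fun setT F1 -> measurable_fun setT F2 ->
  (forall z, 0 <= F1 z) -> (forall z, F1 z <= F2 z) ->
  chanInt s2 v F1 <= chanInt s2 v F2.
Proof.
elim: k v F1 F2 => [|k IH] v F1 F2 mF1 mF2 F10 F12 //=.
apply: ge0_le_integral => //.
- by move=> y _; rewrite mule_ge0 ?fYXE0 // chanInt_ge0.
- apply: emeasurable_funM; first exact: measurable_fYXE.
  exact: chanInt_sec.
- apply: emeasurable_funM; first exact: measurable_fYXE.
  apply: chanInt_sec => // z; exact: le_trans (F10 z) (F12 z).
- move=> y _; apply: lee_wpmul2l; first exact: fYXE0.
  by apply: IH => //; exact: meas_sec.
Qed.

Lemma chanInt_sum k (v : k.-tuple T) (I : Type) (r : seq I)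
  (F : I -> k.-tuple T -> \bar R) :
  (forall i, measurable_fun setT (F i)) -> (forall i z, 0 <= F i z) ->
  chanInt s2 v (fun z => \sum_(i <- r) F i z) = \sum_(i <- r) chanInt s2 v (F i).
Proof.
move=> mF F0; elim: r => [|a r IH].
  under [X in chanInt _ _ X]funext do rewrite big_nil.
  by rewrite big_nil chanInt_cst.
rewrite big_cons -IH.
under [X in chanInt _ _ X]funext do rewrite big_cons.
rewrite chanIntD //.
- exact: emeasurable_sum.
- by move=> z; apply: sume_ge0.
Qed.

Lemma chanInt_nth k (v : k.-tuple T) (i : nat) (x0 : T) (h : T -> \bar R) :
  (i < k)%N -> measurable_fun setT h -> (forall y, 0 <= h y) ->
  chanInt s2 v (fun z => h (nth x0 z i)) =
  \int[LC]_y ((fYX s2 (nth x0 v i) y)%:E * h y).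
Proof.
elim: k v i => [|k IH] v i // ik mh h0.
rewrite chanIntS; case: i ik => [|j] ik.
  have -> : thead v = nth x0 v 0 by case: v => [[|a s] Hs].
  apply: eq_integral => y _ /=.
  by rewrite chanInt_cst.
have -> : nth x0 v j.+1 = nth x0 (behead_tuple v) j by case: v => [[|a s] Hs].
under eq_integral => y _.
  rewrite /= (IH (behead_tuple v) j) //.
  over.
rewrite /= intf_cst //.
by apply: integral_ge0 => y _; rewrite mule_ge0 ?fYXE0.
Qed.

Lemma int_fYX_EgW x (h : T -> \bar R) :
  measurable_fun setT h -> (forall y, 0 <= h y) ->
  \int[LC]_y ((fYX s2 x y)%:E * h y) = EgW s2 h x.
Proof.
move=> mh h0.
rewrite (@integral_lebC_shift R x); last 2 first.
- by apply: emeasurable_funM => //; exact: measurable_fYXE.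
- by move=> y; rewrite mule_ge0 ?fYXE0.
rewrite /EgW; apply: eq_integral => w _.
rewrite muleC /fYX.
suff -> : csub (Defs.cadd x w) x = csub w (0%R, 0%R) by [].
by rewrite /csub /Defs.cadd /= !subr0 !(addrAC _ _ (- _)%R) !subrr !add0r.
Qed.

End Chan.

Section Comb.
Variable R : realType.
Local Notation T := (R * R)%type.
Local Open Scope ereal_scope.

Lemma card_sum n (v : n.-tuple T) x :
  (#|[set t : 'I_n | tnth v t == x]|%:R : R) = (\sum_(t < n) ((tnth v t == x)%:R : R))%R.
Proof.
rewrite -sum1_card natr_sum big_mkcond /=.
apply: eq_bigr => t _; rewrite /in_mem /= /in_set asboolb; by case: (_ == _).
Qed.

Lemma S_ge L n M (xs : 'I_L -> T) (u : 'I_M -> n.-tuple T) (E : T -> \bar R) :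
  (forall x, 0 <= E x) -> (forall i t, exists l, tnth (u i) t = xs l) ->
  (M%:R^-1)%:E * \sum_(i < M) ((n%:R^-1)%:E * \sum_(t < n) E (tnth (u i) t))
  <= \sum_(l < L) ((code_type u (xs l))%:E * E (xs l)).
Proof.
move=> E0 Hx.
have Mi0 : (0 <= M%:R^-1 :> R)%R by rewrite invr_ge0.
have ni0 : (0 <= n%:R^-1 :> R)%R by rewrite invr_ge0.
have b0 (b : bool) : 0 <= (b%:R : R)%:E by rewrite lee_fin; case: b.
have -> : \sum_(l < L) ((code_type u (xs l))%:E * E (xs l)) =
  \sum_(l < L) \sum_(i < M) \sum_(t < n)
     ((M%:R^-1)%:E * ((n%:R^-1)%:E * (((tnth (u i) t == xs l)%:R)%:E * E (xs l)))).
  apply: eq_bigr => l _.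
  rewrite /code_type /ctype EFinM -sumEFin.
  under eq_bigr do rewrite card_sum EFinM -sumEFin.
  rewrite -muleA ge0_sume_distrl; last first.
    by move=> i _; rewrite mule_ge0 ?lee_fin // sume_ge0.
  rewrite ge0_sume_distrr; last first.
    by move=> i _; rewrite mule_ge0 // mule_ge0 ?lee_fin // sume_ge0.
  apply: eq_bigr => i _.
  rewrite -muleA ge0_sume_distrl; last by move=> t _.
  rewrite ge0_sume_distrr; last by move=> t _; rewrite mule_ge0.
  rewrite ge0_sume_distrr //; move=> t _; rewrite mule_ge0 ?lee_fin //.
  by rewrite mule_ge0.
rewrite exchange_big /=.
rewrite ge0_sume_distrr; last first.
  by move=> i _; rewrite mule_ge0 ?lee_fin // sume_ge0.
apply: lee_sum => i _.
rewrite exchange_big /=.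
rewrite ge0_sume_distrr; last by move=> t _.
rewrite ge0_sume_distrr; last by move=> t _; rewrite mule_ge0 ?lee_fin.
apply: lee_sum => t _.
have [l0 Hl0] := Hx i t.
rewrite (bigD1 l0) //= Hl0 eqxx mul1e.
rewrite leeDl //.
by apply: sume_ge0 => l _; rewrite !mule_ge0 ?lee_fin.
Qed.
End Comb.

Theorem corollary1 (R : realType) (n M L : nat) (xs : 'I_L -> R * R)
    (s2 P : R) (g : R * R -> \bar R) (eps B delta : R)
    (u : 'I_M -> n.-tuple (R * R)) (D : 'I_M -> set (n.-tuple (R * R))) :
  (0 < n)%N -> (0 < M)%N -> injective xs -> 0 < s2 -> 0 < P ->
  measurable_fun setT g -> (forall z, (0 <= g z)%E) ->
  0 < eps -> 0 < B ->
  is_code_B s2 P xs u D g eps B delta ->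
  (delta%:E >= maxe (1 - (B^-1)%:E *
       \sum_(l < L) ((code_type u (xs l))%:E * EgW s2 g (xs l))) 0)%E.
Proof.
move=> n0 M0 injx s20 P0 mg g0 e0 B0 [[[Hx _ _ _ _] _] Hth].
set A := [set z : n.-tuple (R * R) | (gbar g z < B%:E)%E].
have EgW0 x : (0 <= EgW s2 g x)%E.
  by apply: integral_ge0 => w _; rewrite mule_ge0 // fYXE0.
have mgbar : measurable_fun setT (gbar g (n:=n)).
  apply: emeasurable_funM => //.
  apply: emeasurable_sum => t.
  exact: measurableT_comp mg (measurable_tnth t).
have mA : measurable A.
  have := measurable_lte measurableT mgbar (measurable_cst B%:E).
  by rewrite setTI.
have Hg i : chanInt s2 (u i) (gbar g (n:=n)) =
    ((n%:R^-1)%:E * \sum_(t < n) EgW s2 g (tnth (u i) t))%E.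
  rewrite /gbar chanIntZ //; last 2 first.
  - apply: emeasurable_sum => t; exact: measurableT_comp mg (measurable_tnth t).
  - by move=> z; apply: sume_ge0 => t _.
  congr (_ * _)%E.
  rewrite chanInt_sum //; last first.
    move=> t; exact: measurableT_comp mg (measurable_tnth t).
  apply: eq_bigr => t _.
  under [X in chanInt _ _ X]funext do rewrite (tnth_nth (0%R, 0%R)).
  by rewrite chanInt_nth // int_fYX_EgW // -tnth_nth.
have gbar0 z : (0 <= gbar g z)%E.
  by rewrite /gbar mule_ge0 ?lee_fin ?invr_ge0 // sume_ge0.
have Hi i : (1 <= chanProb s2 (u i) A +
    (B^-1)%:E * ((n%:R^-1)%:E * \sum_(t < n) EgW s2 g (tnth (u i) t)))%E.
  have Bi0 : (0 <= B^-1)%R by rewrite invr_ge0 ltW.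
  rewrite -Hg /chanProb -chanIntZ //.
  rewrite -chanIntD //; try (by apply/measurable_EFinP; exact: measurable_indic);
    try (exact: emeasurable_funM); try (by move=> z; rewrite mule_ge0 ?lee_fin).
  rewrite -[X in (X <= _)%E](@chanInt_cst R s2 s20 n (u i) 1%E) //.
  apply: chanInt_le => //.
  - apply: emeasurable_funD.
      by apply/measurable_EFinP; exact: measurable_indic.
    exact: emeasurable_funM.
  - move=> z; rewrite indicE; have [zA|zA] := boolP (z \in A).
      by rewrite leeDl // mule_ge0 ?lee_fin.
    rewrite add0e.
    have Bz : (B%:E <= gbar g z)%E.
      by rewrite leNgt; apply/negP => h; apply/negP: zA; rewrite negbK; apply/mem_set.
    apply: le_trans (lee_wpmul2l _ Bz); last by rewrite lee_fin.
    by rewrite -EFinM mulVf ?gt_eqF.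
set S := \sum_(l < L) _.
set b := fun i : 'I_M => ((n%:R^-1)%:E * \sum_(t < n) EgW s2 g (tnth (u i) t))%E.
have HS : ((M%:R^-1)%:E * \sum_(i < M) b i <= S)%E by exact: S_ge.
have b0 i : (0 <= b i)%E by rewrite mule_ge0 ?lee_fin ?invr_ge0 // sume_ge0.
have cp0 i : (0 <= chanProb s2 (u i) A)%E.
  by apply: (@chanInt_ge0 R s2 s20) => z; rewrite lee_fin indicE; case: (_ \in _).
have Bi0 : (0 <= B^-1)%R by rewrite invr_ge0 ltW.
have Mi0 : (0 <= M%:R^-1 :> R)%R by rewrite invr_ge0.
have H1 : (1 <= avg_theta s2 g B u + (B^-1)%:E * ((M%:R^-1)%:E * \sum_(i < M) b i))%E.
  rewrite /avg_theta.
  have -> : (1%E : \bar R) = ((M%:R^-1)%:E * \sum_(i < M) (1%R)%:E)%E.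
    rewrite sumEFin sumr_const card_ord -EFinM mulVf //.
    by rewrite pnatr_eq0 -lt0n.
  have Hs : (\sum_(i < M) (1%R)%:E <=
      \sum_(i < M) (chanProb s2 (u i) A + (B^-1)%:E * b i))%E.
    by apply: lee_sum => i _; exact: Hi i.
  have Mi0' : (0 <= (M%:R^-1)%:E :> \bar R)%E by rewrite lee_fin.
  apply: le_trans (lee_wpmul2l Mi0' Hs) _.
  rewrite big_split /= ge0_muleDr; last 2 first.
  - by apply: sume_ge0 => i _.
  - by apply: sume_ge0 => i _; rewrite mule_ge0 ?lee_fin.
  rewrite -ge0_sume_distrr; last by move=> i _.
  by rewrite muleCA.
have avg0 : (0 <= avg_theta s2 g B u)%E.
  by rewrite /avg_theta mule_ge0 ?lee_fin // sume_ge0 // => i _; exact: cp0.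
rewrite ge_max; apply/andP; split; last exact: le_trans avg0 (ltW Hth).
have ct0 l : (0 <= code_type u (xs l))%R.
  rewrite /code_type mulr_ge0 ?invr_ge0 // sumr_ge0 // => i _.
  by rewrite /ctype mulr_ge0 ?invr_ge0.
have BS0 : (0 <= (B^-1)%:E * S)%E.
  apply: mule_ge0; first by rewrite lee_fin.
  apply: sume_ge0 => l _; apply: mule_ge0; last exact: EgW0.
  by rewrite lee_fin.
have Bi0' : (0 <= (B^-1)%:E :> \bar R)%E by rewrite lee_fin.
move: H1 (lee_wpmul2l Bi0' HS) BS0.
set y := ((B^-1)%:E * S)%E.
set z := ((B^-1)%:E * _)%E.
move=> H1 H2; case: y H2 => [r| |] // H2 _.
  rewrite leeBlDr //.
  apply: (le_trans H1); apply: leeD => //; exact: ltW.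
by rewrite leNye.
Qed.
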